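(* Let $k\ge 1$ and $n\ge 1$ be integers. If the odd cycle $C_{2n+1}$ is a strict prime $k$th-power distance graph, then so is every larger odd cycle $C_{2(n+j)+1}$, $j\ge 1$.
   Context: A graph $G$ is a strict prime $k$th-power distance graph if there is an injective map $L:V(G)\to\mathbb{Z}$ such that for every edge $uv$ of $G$, $|L(u)-L(v)|=p^k$ for some prime $p$ (the prime may depend on the edge). *)

(* Defs.v *)
From mathcomp Require Import all_boot all_order all_algebra.
Set Implicit Arguments. Unset Strict Implicit. Unset Printing Implicit Defensive.
Import Order.TTheory GRing.Theory Num.Theory.

(* A simple graph on a finite vertex type T is given by an adjacency relation e
   (assumed symmetric and irreflexive where relevant). *)

Definition strict_prime_kth_power_distance_graph (k : nat) (T : finType)
    (e : rel T) : Prop :=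
  exists L : T -> int, injective L /\
    forall u v : T, e u v -> exists p : nat, prime p /\ (`|L u - L v|)%R = Posz (p ^ k).

(* The cycle C_m on vertex set {0, ..., m-1}: i ~ j iff j = i+1 mod m or
   i = j+1 mod m.  (Meaningful as a simple cycle for m >= 3.) *)
Definition cycle_rel (m : nat) : rel 'I_m :=
  fun i j => ((j : nat) == (i + 1) %% m) || ((i : nat) == (j + 1) %% m).

(* Main.v *)
Require Import Defs.
From mathcomp Require Import all_boot all_order all_algebra.
From mathcomp Require Import zify.
Import GRing.Theory Num.Theory.

Lemma step (k m : nat) : 1 <= k -> 2 < m ->
  @strict_prime_kth_power_distance_graph k _ (@cycle_rel m) ->
  @strict_prime_kth_power_distance_graph k _ (@cycle_rel m.+2).
Proof.
move=> hk hm [L [Linj HL]].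
pose M := (\sum_(i < m) `|L i|%N)%N.
have Mb : forall o, (`|L o|%N <= M)%N.
  by move=> o; rewrite /M (bigD1 o) //=; apply: leq_addr.
have [q qgt qpr] := prime_above (2 * M).
have dge : (q <= q ^ k)%N.
  by rewrite -{1}(expn1 q) leq_pexp2l // prime_gt0.
have m0 : (0 < m)%N by lia.
have m1 : (m.-1 < m)%N by lia.
pose a := L (Ordinal m1). pose b := L (Ordinal m0).
pose d : int := Posz (q ^ k).
pose f (i : nat) : int :=
  if @insub nat (fun x => x < m)%N _ i is Some o then L o
  else if i == m then (a + d)%R else (b + d)%R.
have fL : forall i (hi : (i < m)%N), f i = L (Ordinal hi).
  move=> i hi; rewrite /f insubT /=; congr L; exact: val_inj.
have fm : f m = (a + d)%R by rewrite /f insubF ?ltnn // eqxx.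
have fm1 : f m.+1 = (b + d)%R.
  rewrite /f insubF; last by rewrite ltnNge leqnSn.
  by have -> : (m.+1 == m) = false by lia.
have ab : a <> b.
  by move=> /Linj /(congr1 val) /=; lia.
have ba := Mb (Ordinal m0). have aa := Mb (Ordinal m1).
have key : forall x, (x < m)%N -> f x <> (a + d)%R /\ f x <> (b + d)%R.
  move=> x hx; rewrite (fL _ hx); have := Mb (Ordinal hx).
  rewrite /d; split; lia.
exists (fun i : 'I_m.+2 => f i); split.
  move=> u v e; apply: val_inj.
  have hu := ltn_ord u; have hv := ltn_ord v.
  move: e; rewrite /=; move: (val u) (val v) hu hv => x y hx hy e; move: e.
  have [xm|xm] := ltnP x m; have [ym|ym] := ltnP y m.
  - by rewrite (fL _ xm) (fL _ ym) => /Linj /(congr1 val).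
  - have [->|] := eqVneq y m; first by rewrite fm => /(key _ xm).1.
    move=> ne; have -> : y = m.+1 by lia.
    by rewrite fm1 => /(key _ xm).2.
  - have [->|] := eqVneq x m; first by rewrite fm => /esym /(key _ ym).1.
    move=> ne; have -> : x = m.+1 by lia.
    by rewrite fm1 => /esym /(key _ ym).2.
  - have [->|ne] := eqVneq x m; have [->|ne'] := eqVneq y m => //.
    + have -> : y = m.+1 by lia. by rewrite fm fm1 => /addIr.
    + have -> : x = m.+1 by lia. by rewrite fm fm1 => /addIr /esym.
    + lia.
have claim : forall x y : nat, (x < m.+2)%N -> y = ((x + 1) %% m.+2)%N ->
    exists p, prime p /\ `|(f x - f y)|%R = Posz (p ^ k).
  move=> x y hx ->.
  have [xm|xm] := ltnP x m.-1.
  - rewrite modn_small; last by lia.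
    have h1 : (x < m)%N by lia. have h2 : (x + 1 < m)%N by lia.
    rewrite (fL _ h1) (fL _ h2); apply: HL.
    by rewrite /cycle_rel /= modn_small // eqxx.
  - have [->|ne] := eqVneq x m.-1.
      rewrite modn_small; last by lia.
      have -> : (m.-1 + 1 = m)%N by lia.
      rewrite fm (fL _ m1); exists q; split => //; rewrite /d /a; lia.
    have [->|ne'] := eqVneq x m.
      rewrite modn_small; last by lia.
      rewrite addn1 fm fm1; have := HL (Ordinal m1) (Ordinal m0).
      rewrite /cycle_rel /= (_ : (m.-1 + 1 = m)%N); last by lia.
      rewrite modnn eqxx /= => /(_ isT) [p [pp hp]]; exists p; split => //.
      rewrite -hp -/a -/b; lia.
    have -> : x = m.+1 by lia.
    rewrite addn1 modnn fm1 (fL _ m0); exists q; split => //; rewrite /d /b; lia.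
move=> u v /orP [/eqP e|/eqP e].
  exact: claim (ltn_ord u) e.
have [p [pp hp]] := claim _ _ (ltn_ord v) e.
by exists p; split => //; rewrite distrC.
Qed.

Theorem mainTheorem13 (k n : nat) (hk : 1 <= k) (hn : 1 <= n) :
  @strict_prime_kth_power_distance_graph k _ (@cycle_rel (2 * n + 1)) ->
  forall j : nat, 1 <= j ->
    @strict_prime_kth_power_distance_graph k _ (@cycle_rel (2 * (n + j) + 1)).
Proof.
move=> H j _; elim: j => [|j IH]; first by rewrite addn0.
have -> : (2 * (n + j.+1) + 1 = (2 * (n + j) + 1).+2)%N by lia.
apply: step => //; lia.
Qed.
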